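(* For the Steiner tree problem with revenues, budgets and hop constraints (STPRBH), the partial-ordering model (P-STPRBH) is strictly stronger than the assignment model (A-STPRBH): for every STPRBH instance the LP relaxation values satisfy $\nu_{\text{P-STPRBH}}\le\nu_{\text{A-STPRBH}}$, and there exist STPRBH instances for which this inequality is strict.
   Context: STPRBH instance: a complete undirected graph $G=(V,E)$ with edge costs $c:E\to\mathbb{R}_{>0}$, node revenues $\rho:V\to\mathbb{R}_{\ge0}$, a root $r\in V$, a hop limit $H\ge1$ and a budget $B\ge0$. For every ordered pair $(u,v)$ of distinct nodes there is a variable $x_{u,v}$. Common $x$-constraints: (X1) $\sum_{u\neq v}x_{u,v}\le1$ for all $v\in V$; (X2) $\sum_{u\in V\setminus\{v,w\}}x_{u,v}\ge x_{v,w}$ for all $v\in V\setminus\{r\}$, $w\neq v$; (X3) $0\le x_{u,v}\le1$; (X5) $\sum_{uv\in E}c_{uv}(x_{u,v}+x_{v,u})\le B$. $\mathcal{P}^{STPRBH}$: all $(x,l,g)$ (with $l_{v,i},g_{i,v}$ for $v\in V$, $i=0,\dots,H$) satisfying (X1)–(X3),(X5) and $l_{r,0}=g_{0,r}=0$; $l_{v,1}=g_{H,v}=0$ for $v\neq r$; $l_{v,i}\le l_{v,i+1}$ and $g_{i,v}+l_{v,i+1}=1$ for $v\in V$, $i=0,\dots,H-1$; $l_{u,i}+g_{i,v}\ge x_{u,v}$ for $u\neq v$, $i=0,\dots,H$; $0\le l,g\le1$. $\mathcal{A}^{STPRBH}$: all $(x,y)$ (with $y_{v,i}$ for $v\in V$,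 $i=0,\dots,H$) satisfying (X1)–(X3),(X5) and $y_{r,0}=1$; $y_{r,i}=0$ for $i\ge1$; $y_{v,0}=0$ and $\sum_{i=1}^Hy_{v,i}=1$ for $v\neq r$; $y_{u,i}-y_{v,i+1}+x_{u,v}\le1$ for $u\neq v$, $i=0,\dots,H-1$; $y_{u,H}+x_{u,v}\le1$ for $u\neq v$; $0\le y\le1$. (A-STPRBH) and (P-STPRBH) maximize $\rho_r+\sum_{uv\in E}(x_{u,v}\rho_v+x_{v,u}\rho_u)$ over the integral points of $\mathcal{A}^{STPRBH}$ and $\mathcal{P}^{STPRBH}$ respectively. $\nu_M$ is the optimal value of the LP relaxation of ILP $M$. For a maximization problem, model $A$ is stronger than $B$ if $\nu_A\le\nu_B$ on all instances, and strictly stronger if moreover strict inequality holds for some instance. *)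

(* Defs.v *)
From HB Require Import structures.
From mathcomp Require Import all_boot all_order all_algebra.
From mathcomp Require Import boolp classical_sets reals.
Set Implicit Arguments. Unset Strict Implicit. Unset Printing Implicit Defensive.
Import Order.TTheory GRing.Theory Num.Theory.
Local Open Scope ring_scope.
Local Open Scope classical_set_scope.

Section STPRBH.
Variable R : realType.

(* Edge costs c u v are read for the edge uv with u < v;
   x u v is the variable x_{u,v} (diagonal entries unused).
   Layered variables l v i, g i v, y v i are indexed by i : nat, only
   i = 0..H is constrained (other indices are irrelevant dummies). *)

Definition is_instance n (c : 'I_n -> 'I_n -> R) (rho : 'I_n -> R)
    (H : nat) (B : R) : Prop :=
  [/\ forall u v : 'I_n, u != v -> 0 < c u v,
      forall v, 0 <= rho v, (1 <= H)%N & 0 <= B].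

Definition objective n (rho : 'I_n -> R) (r : 'I_n) (x : 'I_n -> 'I_n -> R) : R :=
  rho r + \sum_(u : 'I_n) \sum_(v : 'I_n | (u < v)%N) (x u v * rho v + x v u * rho u).

Definition x_constraints n (c : 'I_n -> 'I_n -> R) (r : 'I_n) (B : R)
    (x : 'I_n -> 'I_n -> R) : Prop :=
  [/\ forall v : 'I_n, \sum_(u : 'I_n | u != v) x u v <= 1,
      forall v w : 'I_n, v != r -> w != v ->
                 x v w <= \sum_(u : 'I_n | (u != v) && (u != w)) x u v,
      forall u v : 'I_n, u != v -> 0 <= x u v <= 1 &
      \sum_(u : 'I_n) \sum_(v : 'I_n | (u < v)%N) c u v * (x u v + x v u) <= B].

Definition in_P n (c : 'I_n -> 'I_n -> R) (r : 'I_n) (H : nat) (B : R)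
    (x : 'I_n -> 'I_n -> R) (l : 'I_n -> nat -> R) (g : nat -> 'I_n -> R) : Prop :=
  [/\ x_constraints c r B x /\ (l r 0%N = 0 /\ g 0%N r = 0),
      forall v : 'I_n, v != r -> l v 1%N = 0 /\ g H v = 0,
      forall (v : 'I_n) (i : nat), (i < H)%N ->
        l v i <= l v i.+1 /\ g i v + l v i.+1 = 1,
      forall (u v : 'I_n) (i : nat), u != v -> (i <= H)%N -> x u v <= l u i + g i v &
      forall (v : 'I_n) (i : nat), (i <= H)%N -> (0 <= l v i <= 1) /\ (0 <= g i v <= 1)].

Definition in_A n (c : 'I_n -> 'I_n -> R) (r : 'I_n) (H : nat) (B : R)
    (x : 'I_n -> 'I_n -> R) (y : 'I_n -> nat -> R) : Prop :=
  [/\ x_constraints c r B x /\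
      (y r 0%N = 1 /\ (forall i, (1 <= i <= H)%N -> y r i = 0)),
      forall v : 'I_n, v != r -> y v 0%N = 0 /\ \sum_(1 <= i < H.+1) y v i = 1,
      forall (u v : 'I_n) (i : nat), u != v -> (i < H)%N -> y u i - y v i.+1 + x u v <= 1,
      forall u v : 'I_n, u != v -> y u H + x u v <= 1 &
      forall (v : 'I_n) (i : nat), (i <= H)%N -> 0 <= y v i <= 1].

Definition nu_P n c rho r H B : R :=
  sup [set objective rho r x | x in
        [set x | exists l g, @in_P n c r H B x l g]].

Definition nu_A n c rho r H B : R :=
  sup [set objective rho r x | x in
        [set x | exists y, @in_A n c r H B x y]].

End STPRBH.

(* Main.v *)
Require Import Defs.
From HB Require Import structures.
From mathcomp Require Import all_boot all_order all_algebra.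
From mathcomp Require Import boolp classical_sets reals.
From mathcomp Require Import lra.
Import Order.TTheory GRing.Theory Num.Theory.
Local Open Scope ring_scope.
Local Open Scope classical_set_scope.
Set Implicit Arguments. Unset Strict Implicit. Unset Printing Implicit Defensive.

Section Constr.
Variable R : realType.
Variable n : nat.
Variables (c : 'I_n -> 'I_n -> R) (r : 'I_n) (H : nat) (B : R).
Variables (x : 'I_n -> 'I_n -> R) (l : 'I_n -> nat -> R) (g : nat -> 'I_n -> R).

Definition Tc (v : 'I_n) (k : nat) : R := \sum_(k.+1 <= j < H.+1) (1 - l v j).
Definition forced (y : 'I_n -> R) (v : 'I_n) : R :=
  \big[Num.max/0]_(u | u != v) (y u - (1 - x u v)).
Definition d0 (v : 'I_n) : R := if v == r then 1 else 0.

Fixpoint st (k : nat) : ('I_n -> R) * ('I_n -> R) * ('I_n -> R) :=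
  match k with
  | 0 => (d0, d0, fun _ => 0)
  | k'.+1 => let: (y, Y, _) := st k' in
     let y' := fun v => if v == r then 0
                        else Num.max (forced y v) (1 - Y v - Tc v k'.+1) in
     (y', fun v => Y v + y' v, Y)
  end.

Definition yk k := (st k).1.1.
Definition Yk k := (st k).1.2.
Definition Yp k := (st k).2.

Lemma st_S k : st k.+1 =
  ((fun v => if v == r then 0 else Num.max (forced (yk k) v) (1 - Yk k v - Tc v k.+1)),
   (fun v => Yk k v + (if v == r then 0 else Num.max (forced (yk k) v) (1 - Yk k v - Tc v k.+1))),
   Yk k).
Proof. by rewrite /= /yk /Yk; case: (st k) => [[]]. Qed.

Lemma forced_ge0 y v : 0 <= forced y v.
Proof. exact: bigmax_ge_id. Qed.

Lemma forced_ge y u v : u != v -> y u - (1 - x u v) <= forced y v.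
Proof. by move=> uv; rewrite /forced; apply: le_bigmax_cond. Qed.

Lemma forced_le y v M : 0 <= M -> (forall u, u != v -> y u - (1 - x u v) <= M) ->
  forced y v <= M.
Proof. by move=> M0 hM; apply: bigmax_le. Qed.


Hypothesis HP : in_P c r H B x l g.
Hypothesis H1 : (1 <= H)%N.

Lemma P_lb v i : (i <= H)%N -> 0 <= l v i <= 1.
Proof. by move=> hi; case: HP => _ _ _ _ h; case: (h v i hi). Qed.
Lemma P_lr0 : l r 0 = 0.
Proof. by case: HP => [[_ [->]]]. Qed.
Lemma P_g0r : g 0 r = 0.
Proof. by case: HP => [[_ [_ ->]]]. Qed.
Lemma P_lv1 v : v != r -> l v 1 = 0.
Proof. by move=> vr; case: HP => _ h _ _ _; case: (h v vr). Qed.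
Lemma P_gH v : v != r -> g H v = 0.
Proof. by move=> vr; case: HP => _ h _ _ _; case: (h v vr). Qed.
Lemma P_g i v : (i < H)%N -> g i v = 1 - l v i.+1.
Proof. move=> iH; case: HP => _ _ h _ _; case: (h v i iH) => _ e; lra. Qed.
Lemma P_mono i v : (i < H)%N -> l v i <= l v i.+1.
Proof. by move=> iH; case: HP => _ _ h _ _; case: (h v i iH). Qed.
Lemma P_x u v i : u != v -> (i <= H)%N -> x u v <= l u i + g i v.
Proof. by case: HP => _ _ _ h _; apply: h. Qed.
Lemma P_X : x_constraints c r B x.
Proof. by case: HP => [[]]. Qed.
Lemma P_x01 u v : u != v -> 0 <= x u v <= 1.
Proof. by case: P_X => _ _ h _; apply: h. Qed.
Lemma P_X1 v : \sum_(u | u != v) x u v <= 1.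
Proof. by case: P_X. Qed.

Lemma xP k u v : u != v -> (k < H)%N -> x u v <= l u k + 1 - l v k.+1.
Proof. by move=> uv kH; have := P_x uv (ltnW kH); rewrite P_g //; lra. Qed.

Lemma xur u : u != r -> x u r = 0.
Proof.
move=> ur; have := P_x ur (leq0n H); rewrite P_g0r addr0.
have := P_mono u H1; rewrite P_lv1 // => h1 h2.
have /andP[h3 _] := P_x01 ur; lra.
Qed.

Lemma xH u v : u != v -> v != r -> x u v <= l u H.
Proof. by move=> uv vr; have := P_x uv (leqnn H); rewrite P_gH // addr0. Qed.

Lemma maxpos_add (a A s : R) : 0 <= a -> 0 <= A -> 0 <= s ->
  Num.max 0 (A - s) + Num.max 0 (a - s) <= Num.max 0 (A + a - s).
Proof. move=> *; rewrite !maxEle. case: (leP 0 (A - s)) => ?; case: (leP 0 (a - s)) => ?; case: (leP 0 (A + a - s)) => ?; lra. Qed.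

Lemma TcS v k : (k < H)%N -> Tc v k = (1 - l v k.+1) + Tc v k.+1.
Proof. by move=> kH; rewrite /Tc big_ltn // ltnS. Qed.

Lemma Tc_ge0 v k : 0 <= Tc v k.
Proof.
rewrite /Tc big_seq_cond; apply: sumr_ge0 => j /andP[]; rewrite mem_index_iota.
move=> /andP[_ jH] _; have /andP[_ ?] := P_lb v jH; lra.
Qed.

Lemma TcH v : Tc v H = 0.
Proof. by rewrite /Tc big_geq. Qed.

Lemma Tc0 v : v != r -> 1 <= Tc v 0.
Proof. by move=> vr; rewrite (TcS v H1) P_lv1 // subr0 lerDl Tc_ge0. Qed.

Definition Sk k v := \sum_(u | u != v) Num.max 0 (Yp k u - (1 - x u v)).

Lemma Sk_ge0 k v : 0 <= Sk k v.
Proof. by apply: sumr_ge0 => u _; rewrite le_max lexx. Qed.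

Lemma forced_le_sum y v : forced y v <= \sum_(u | u != v) Num.max 0 (y u - (1 - x u v)).
Proof.
apply: forced_le; first by apply: sumr_ge0 => u _; rewrite le_max lexx.
move=> u uv; rewrite (bigD1 u) //=.
apply: (@le_trans _ _ (Num.max 0 (y u - (1 - x u v)))); first by rewrite le_max lexx orbT.
by rewrite lerDl; apply: sumr_ge0 => w _; rewrite le_max lexx.
Qed.

Definition INV k :=
  (forall v, 0 <= yk k v) /\
  (forall v, yk k v <= 1 - l v k) /\
  (forall v, v != r -> 1 - Tc v k <= Yk k v) /\
  (forall v, v != r -> Yk k v <= Num.max (1 - Tc v k) (Sk k v)) /\
  (forall v, 0 <= Yk k v <= 1) /\
  (forall v, 0 <= Yp k v) /\
  (forall v, Yk k v = Yp k v + yk k v) /\ Yk k r = 1.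

Lemma INV0 : INV 0.
Proof.
rewrite /INV /yk /Yk /Yp /= /d0; split; [|split; [|split; [|split; [|split; [|split; [|split]]]]]].
- by move=> v; case: ifP.
- move=> v; case: eqP => [->|_]; first by rewrite P_lr0 subr0.
  by have /andP[_ ?] := P_lb v (leq0n H); lra.
- by move=> v vr; rewrite (negbTE vr); have := Tc0 vr; lra.
- move=> v vr; rewrite (negbTE vr); apply: le_trans (Sk_ge0 0 v) _.
  by rewrite le_max lexx orbT.
- by move=> v; case: ifP => _; rewrite ?lexx ?ler01.
- by move=> _; rewrite lexx.
- by move=> v; rewrite add0r.
- by rewrite eqxx.
Qed.

Lemma ykS k v : yk k.+1 v =
  if v == r then 0 else Num.max (forced (yk k) v) (1 - Yk k v - Tc v k.+1).
Proof. by rewrite {1}/yk st_S. Qed.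
Lemma YkS k v : Yk k.+1 v = Yk k v + yk k.+1 v.
Proof. by rewrite {1}/Yk st_S /= ykS. Qed.
Lemma YpS k : Yp k.+1 = Yk k.
Proof. by rewrite /Yp st_S. Qed.

Lemma forced_cap k v : (k < H)%N -> (forall u, yk k u <= 1 - l u k) ->
  forced (yk k) v <= 1 - l v k.+1.
Proof.
move=> kH hy; apply: forced_le; first by have /andP[_ ?] := P_lb v kH; lra.
by move=> u uv; have := xP uv kH; have := hy u; lra.
Qed.

Lemma INVS k : (k < H)%N -> INV k -> INV k.+1.
Proof.
move=> kH [i1 [i2 [i3 [i4 [i5 [i6 [i7 i8]]]]]]].
have F0 v : 0 <= forced (yk k) v := forced_ge0 _ _.
have Fc v : forced (yk k) v <= 1 - l v k.+1 := forced_cap v kH i2.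
have TS v := TcS v kH.
have Tg v := Tc_ge0 v k.+1.
have yr : yk k.+1 r = 0 by rewrite ykS eqxx.
have yv v : v != r -> yk k.+1 v =
   Num.max (forced (yk k) v) (1 - Yk k v - Tc v k.+1) by move=> vr; rewrite ykS (negbTE vr).
have y0 v : 0 <= yk k.+1 v.
  by case: (eqVneq v r) => [->|vr]; rewrite ?yr ?lexx // yv // le_max F0.
have i4' v : v != r -> Yk k.+1 v <= Num.max (1 - Tc v k.+1) (Sk k.+1 v).
  move=> vr; rewrite YkS yv // /Sk YpS.
  case: (leP (forced (yk k) v) (1 - Yk k v - Tc v k.+1)) => hF.
    by rewrite le_max; apply/orP; left; lra.

  have := i4 v vr; rewrite le_max => /orP [h|h].
    by rewrite le_max; apply/orP; left; have := Fc v; have := TS v; lra.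
  rewrite le_max; apply/orP; right.
  apply: (le_trans (lerD h (forced_le_sum (yk k) v))).
  rewrite /Sk -big_split /=; apply: ler_sum => u uv.
  rewrite i7; apply: maxpos_add; [exact: i1|exact: i6|].
  by have /andP[_ ?] := P_x01 uv; lra.
have i3' v : v != r -> 1 - Tc v k.+1 <= Yk k.+1 v.
  move=> vr; rewrite YkS yv //.
  have : 1 - Yk k v - Tc v k.+1 <= Num.max (forced (yk k) v) (1 - Yk k v - Tc v k.+1).
    by rewrite le_max lexx orbT.
  lra.
have Yr : Yk k.+1 r = 1 by rewrite YkS yr addr0.
split; [exact: y0|split; [|split; [exact: i3'|split; [exact: i4'|split; [|split; [|split]]]]]].
- move=> v; case: (eqVneq v r) => [->|vr].
    by rewrite yr; have /andP[_ ?] := P_lb r kH; lra.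
  rewrite yv // ge_max Fc /=.
  by have := i3 v vr; have := TS v; lra.
- move=> v; case: (eqVneq v r) => [->|vr]; first by rewrite Yr ler01 lexx.
  apply/andP; split; first by rewrite YkS; have /andP[? _] := i5 v; have := y0 v; lra.
  apply: (le_trans (i4' v vr)); rewrite ge_max; apply/andP; split.
    by have := Tg v; lra.
  apply: (le_trans (y := \sum_(u | u != v) x u v)); last exact: P_X1.
  rewrite /Sk YpS; apply: ler_sum => u uv; rewrite ge_max.
  have /andP[? ?] := P_x01 uv; have /andP[_ ?] := i5 u.
  by apply/andP; split; lra.
- by move=> v; rewrite YpS; have /andP[] := i5 v.
- by move=> v; rewrite YkS YpS.
- exact: Yr.
Qed.

Lemma INV_all k : (k <= H)%N -> INV k.
Proof.
elim: k => [|k IH] kH; first exact: INV0.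
by apply: INVS => //; apply: IH; apply: ltnW.
Qed.

Lemma Ycum k v : Yk k v = \sum_(j < k.+1) yk j v.
Proof.
elim: k => [|k IH]; first by rewrite big_ord1.
by rewrite YkS IH [in RHS]big_ord_recr.
Qed.

Lemma y_le1 i v : (i <= H)%N -> 0 <= yk i v <= 1.
Proof.
move=> iH; have [i1 [i2 _]] := INV_all iH.
have /andP[? _] := P_lb v iH; have := i2 v; have := i1 v.
by move=> *; apply/andP; split; lra.
Qed.

Lemma in_A_constr : in_A c r H B x (fun v i => yk i v).
Proof.
split.
- split; first exact: P_X.
  split; first by rewrite /yk /= /d0 eqxx.
  by move=> [|i] // _; rewrite ykS eqxx.
- move=> v vr; split; first by rewrite /yk /= /d0 (negbTE vr).
  have [_ [_ [i3 [_ [i5 _]]]]] := INV_all (leqnn H).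
  have := i3 v vr; rewrite TcH subr0 => h1.
  have /andP[_ h2] := i5 v.
  have e : Yk H v = 1 by apply/eqP; rewrite eq_le h2 h1.
  move: e; rewrite Ycum -(big_mkord xpredT (fun j => yk j v)) big_ltn //.
  by rewrite {1}/yk /= /d0 (negbTE vr) add0r.
- move=> u v i uv iH.
  case: (eqVneq v r) => [vr|vr].
    subst v; rewrite ykS eqxx subr0 xur //.
    by have /andP[_ ?] := y_le1 u (ltnW iH); lra.
  rewrite ykS (negbTE vr).
  have h := forced_ge (yk i) uv.
  have : forced (yk i) v <= Num.max (forced (yk i) v) (1 - Yk i v - Tc v i.+1).
    by rewrite le_max lexx.
  lra.
- move=> u v uv.
  have [_ [i2 _]] := INV_all (leqnn H).
  case: (eqVneq v r) => [vr|vr].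
    by subst v; rewrite xur // addr0; have /andP[_ ?] := y_le1 u (leqnn H).
  by have := xH uv vr; have := i2 u; lra.
- by move=> v i iH; apply: y_le1.
Qed.

End Constr.

Lemma sup_sub (R : realType) (S T : set R) (M : R) : S `<=` T ->
  (forall z, T z -> 0 <= z <= M) -> sup S <= sup T.
Proof.
move=> ST hM.
have [[z Tz]|T0] := pselect (T !=set0).
  have hsT : has_sup T.
    by split; [exists z | exists M => w /hM /andP[]].
  have [[w Sw]|S0] := pselect (S !=set0).
    apply: ge_sup; first by exists w.
    by move=> y Sy; apply: sup_upper_bound => //; exact: ST.
  have -> : S = set0 by apply/seteqP; split=> [y Sy|y] //; apply: S0; exists y.
  rewrite sup0; apply: le_trans (sup_upper_bound hsT Tz).
  by have /andP[] := hM z Tz.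
rewrite (_ : T = set0); last by apply/seteqP; split=> [y Ty|y] //; apply: T0; exists y.
have -> : S = set0.
  by apply/seteqP; split=> [y Sy|y] //; apply: T0; exists y; exact: ST.
by [].
Qed.

Lemma obj_bounds (R : realType) n (c : 'I_n -> 'I_n -> R) rho r B x :
  (forall v, 0 <= rho v) -> x_constraints c r B x ->
  0 <= objective rho r x <=
  rho r + \sum_(u : 'I_n) \sum_(v : 'I_n | (u < v)%N) (rho v + rho u).
Proof.
move=> hr [_ _ hx _]; apply/andP; split.
  apply: addr_ge0 => //; apply: sumr_ge0 => u _; apply: sumr_ge0 => v uv.
  have uv' : u != v by apply: contraTneq uv => ->; rewrite ltnn.
  have vu' : v != u by rewrite eq_sym.
  have /andP[? _] := hx _ _ uv'; have /andP[? _] := hx _ _ vu'.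
  by apply: addr_ge0; apply: mulr_ge0.
rewrite /objective lerD2l; apply: ler_sum => u _; apply: ler_sum => v uv.
have uv' : u != v by apply: contraTneq uv => ->; rewrite ltnn.
have vu' : v != u by rewrite eq_sym.
have /andP[_ h1] := hx _ _ uv'; have /andP[_ h2] := hx _ _ vu'.
apply: lerD; rewrite -[X in _ <= X]mul1r; apply: ler_wpM2r => //.
Qed.

Lemma part1 (R : realType) :
  forall (n : nat) (c : 'I_n -> 'I_n -> R) (rho : 'I_n -> R) (r : 'I_n)
          (H : nat) (B : R),
      is_instance c rho H B -> nu_P c rho r H B <= nu_A c rho r H B.
Proof.
move=> n c rho r H B [hc hr hH hB].
rewrite /nu_P /nu_A.
apply: (sup_sub (M := rho r + \sum_(u : 'I_n) \sum_(v : 'I_n | (u < v)%N) (rho v + rho u))).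
  move=> z [x [l [g hP]] <-]; exists x => //.
  by exists (fun v i => yk r H x l i v); apply: in_A_constr hP hH.
move=> z [x [y hA] <-]; case: hA => [[hX _] _ _ _ _].
exact: (obj_bounds hr hX).
Qed.

Section Ex.
Variable R : realType.
Definition x3 (u v : 'I_3) : R :=
  if [|| ((u == 0 :> nat) && (v == 2 :> nat)), ((u == 2 :> nat) && (v == 1 :> nat))
      | ((u == 1 :> nat) && (v == 0 :> nat))] then 1/2 else 0.
Definition y3 (v : 'I_3) (i : nat) : R :=
  if (v == 0 :> nat) then (i == 0)%:R else if (i == 1) || (i == 2) then 1/2 else 0.
Definition rho3 (v : 'I_3) : R := if (v == 0 :> nat) then 1 else 0.
Definition c3 (u v : 'I_3) : R := 1.

Ltac ordcase u := case: u => [[|[|[|//]]] ?].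

Lemma X3 : x_constraints c3 ord0 2 x3.
Proof.
split.
- move=> v; rewrite big_mkcond !big_ord_recl big_ord0 /=.
  ordcase v; rewrite /x3 /=; lra.
- move=> v w; ordcase v; ordcase w => //= _ _;
  rewrite big_mkcond !big_ord_recl big_ord0 /x3 /=; lra.
- move=> u v; ordcase u; ordcase v => //= _; rewrite /x3 /=; lra.
- rewrite /c3 !big_ord_recl big_ord0 /=.
  do 4 (rewrite ?big_mkcond ?big_ord_recl ?big_ord0 /=); rewrite /x3 /=; lra.
Qed.

Lemma A3 : in_A c3 ord0 2 2 x3 y3.
Proof.
split.
- split; first exact: X3.
  split; first by rewrite /y3.
  by move=> [|[|[|i]]] //; rewrite /y3.
- move=> v; ordcase v => //= _; rewrite /y3 /= big_ltn // big_ltn // big_geq //=; lra.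
- move=> u v i; ordcase u; ordcase v => //= _; case: i => [|[|i]] //= _;
  rewrite /y3 /x3 /=; lra.
- move=> u v; ordcase u; ordcase v => //= _; rewrite /y3 /x3 /=; lra.
- move=> v i; ordcase v; case: i => [|[|[|i]]] //= _; rewrite /y3 /=; lra.
Qed.

Lemma obj3 : objective rho3 ord0 x3 = 3/2.
Proof.
rewrite /objective.
do 4 (rewrite ?big_mkcond ?big_ord_recl ?big_ord0 /=); rewrite /x3 /rho3 /=; lra.
Qed.


Lemma part2 : exists (n : nat) (c : 'I_n -> 'I_n -> R) (rho : 'I_n -> R) (r : 'I_n)
          (H : nat) (B : R),
      is_instance c rho H B /\ nu_P c rho r H B < nu_A c rho r H B.
Proof.
exists 3, c3, rho3, ord0, 2%N, 2; split.
  split.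
  - by move=> u v _; rewrite /c3 ltr01.
  - by move=> v; rewrite /rho3; case: ifP => _; rewrite ?ler01 ?lexx.
  - by [].
  - by rewrite ler0n.
have hP : nu_P c3 rho3 ord0 2 2 <= 1.
  rewrite /nu_P -[X in _ <= X](sup1 (1 : R)); apply: (sup_sub (M := 1)); last first.
    by move=> z ->; rewrite ler01 lexx.
  move=> z [x [l [g hPx]] <-] /=.
  have xr u : u != ord0 -> x u ord0 = 0 := @xur _ _ _ _ _ _ _ _ _ hPx (isT : (1 <= 2)%N) u.
  rewrite /objective big1 ?addr0 /rho3 //= => u _; rewrite big1 // => v uv.
  have -> : (v == 0 :> nat) = false by apply/negbTE; rewrite -lt0n; apply: leq_ltn_trans uv.
  case: eqP => [u0|_]; last by rewrite !mulr0 addr0.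
  have -> : u = ord0 by apply: val_inj.
  rewrite xr ?mul0r ?mulr0 ?addr0 //.
  by apply/eqP => v0; move: uv; rewrite v0 u0.
have hA : 3/2 <= nu_A c3 rho3 ord0 2 2.
  rewrite /nu_A; apply: sup_upper_bound; last by exists x3 => //; [exists y3; exact: A3|exact: obj3].
  split; first by exists (3/2); exists x3 => //; [exists y3; exact: A3|exact: obj3].
  exists (rho3 ord0 + \sum_(u : 'I_3) \sum_(v : 'I_3 | (u < v)%N) (rho3 v + rho3 u)).
  move=> z [x [y hy] <-]; case: hy => [[hX _] _ _ _ _].
  have hr v : 0 <= rho3 v by rewrite /rho3; case: ifP => _; rewrite ?ler01 ?lexx.
  by case/andP: (obj_bounds hr hX).
lra.
Qed.
End Ex.

Local Close Scope classical_set_scope.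
Unset Implicit Arguments.

Theorem theorem5 (R : realType) :
  (forall (n : nat) (c : 'I_n -> 'I_n -> R) (rho : 'I_n -> R) (r : 'I_n)
          (H : nat) (B : R),
      is_instance c rho H B -> nu_P c rho r H B <= nu_A c rho r H B) /\
  (exists (n : nat) (c : 'I_n -> 'I_n -> R) (rho : 'I_n -> R) (r : 'I_n)
          (H : nat) (B : R),
      is_instance c rho H B /\ nu_P c rho r H B < nu_A c rho r H B).
Proof.
split; [exact: part1 | exact: part2].
Qed.
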